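(* Let $P'=(P_1,\dots,P_m,0,\dots,0)$ and $Q'=(0,\dots,0)$ (both of length $m+n$) and $K:=L^{\mathrm{skew}}_{A_{m+n-1}}(P'/Q')$, the latter encoded by arrays $(g'_{k,l})_{0\le k\le m+n,\ l\in C'_k}$ with $C'_k:=\{k-(m+n-1),\dots,k\}$ (the construction below with $m+n$ in place of both $m$ and $n$), and with its own edge coefficients $X',Y'$ given by the same formulas. For $x\in L:=L^{\mathrm{skew}}_{A_{n-1}}(P/Q)$ with array $(g_{i,j}(x))$, define the array $\phi(x)$ by: $g'_{k,l}(\phi(x)):=0$ if $l\le 0$; $:=g_{0,l-m}(x)$ if $1\le k\le m-1$, $1\le l\le k$; $:=0$ if $m+1\le k\le m+n$, $1\le l\le k-m$; $:=g_{k-m,l-m}(x)$ if $m\le k\le m+n$, $k-m+1\le l\le k$. Then: $\phi(x)$ is the array of an element of $K$, and $\phi:L\to K$ is injective; $S\xrightarrow{i}T$ in $L$ iff $\phi(S)\xrightarrow{i+m}\phi(T)$ in $K$; $\phi(L)$ equals the $J$-component of $\phi(M)$ in $K$, where $J=\{m+1,\dots,m+n-1\}$ and $M$ is the maximum of $L$; $m_{i+m}(\phi(x))=m_i(x)$ for all $x\in L$ and $1\le i\le n-1$ (weights computed in $K$ and $L$ respectively); and for every edge $S\xrightarrow{i}T$ of $L$, $X'_{\phi(T),\phi(S)}=X_{T,S}$ and $Y'_{\phi(S),\phi(T)}=Y_{S,T}$.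
   Context: Fix integers $m\ge n\ge 2$ and weakly decreasing $m$-tuples of nonnegative integers $P=(P_1,\dots,P_m)$ and $Q=(Q_1,\dots,Q_m)$ with $Q_r\le P_r$ for all $r$. The skew shape $P/Q$ is the set of cells $(r,c)$ (row $r$, column $c$, matrix convention) with $Q_r<c\le P_r$; assume no column of $P/Q$ contains more than $n$ cells. $L^{\mathrm{skew}}_{A_{n-1}}(P/Q)$ is the set of semistandard tableaux $T$ of shape $P/Q$ with entries in $\{1,\dots,n\}$ (entries weakly increase left to right along rows and strictly increase top to bottom down columns), partially ordered by $S\le T$ iff $S_{r,c}\ge T_{r,c}$ for every cell $(r,c)$. The Hasse diagram edges are colored: $S\to T$ is a covering iff $S,T$ differ in exactly one cell $(r,c)$ and $S_{r,c}=T_{r,c}+1$; this edge gets color $i:=T_{r,c}\in\{1,\dots,n-1\}$, written $S\xrightarrow{i}T$. GT parallelograms: for $0\le i\le n$ put $C_i:=\{i-(m-1),\dots,i-1,i\}$. To each tableau $T$ associate the integer array $(g_{i,j}(T))_{0\le i\le n,\,j\in C_i}$ defined by $g_{i,i+1-r}(T):=Q_r+|\{c:(r,c)\in P/Q,\ T_{r,c}\le i\}|$ for $1\le r\le m$. (Thus $g_{0,j}=Q_{1-j}$, $g_{n,j}=P_{n+1-j}$, and these are exactly the integer arrays with these boundary columns satisfying $\max(g_{i-1,j-1},g_{i+1,j})\le g_{i,j}\le\min(g_{i-1,j},g_{i+1,j+1})$, undefined terms ignored.) One has $S\xrightarrow{i}T$ iff the arrays of $S$ and $T$ agree except at exactly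 one position $(i,j)$, where $g_{i,j}(T)=g_{i,j}(S)+1$. Edge coefficients: for an edge $S\xrightarrow{i}T$ with differing position $(i,j)$, writing $g_{p,q}:=g_{p,q}(T)$, $$X_{T,S}:=-\frac{\prod_{k\in C_{i+1}}(g_{i,j}-g_{i+1,k}+j-k)}{\prod_{k\in C_i\setminus\{j\}}(g_{i,j}-g_{i,k}+j-k-1)},\qquad Y_{S,T}:=\frac{\prod_{k\in C_{i-1}}(g_{i,j}-g_{i-1,k}+j-k-1)}{\prod_{k\in C_i\setminus\{j\}}(g_{i,j}-g_{i,k}+j-k)}.$$ Components and weights on colored posets: for a set $J$ of colors, the $J$-component of $t$ is the set of elements reachable from $t$ by undirected paths using only edges with colors in $J$. For a single color $i$, with $l_i(t)$ the length of the $i$-component of $t$ and $\rho_i(t)$ the rank of $t$ in it, $m_i(t):=2\rho_i(t)-l_i(t)$. *)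

(* Defs.v *)
From HB Require Import structures.
From mathcomp Require Import all_boot all_order all_algebra.
From Stdlib Require Import ClassicalEpsilon.
Set Implicit Arguments. Unset Strict Implicit. Unset Printing Implicit Defensive.
Import Order.TTheory GRing.Theory Num.Theory.

(* A tableau: entry in row r, column c (both 1-based, matrix convention).
   Outside the cells of the shape the entry is normalised to 0, so that
   tableaux of a given shape are determined by their entries on the cells. *)
Definition tab := nat -> nat -> nat.

Definition cell (N : nat) (P Q : nat -> nat) (r c : nat) : bool :=
  (1 <= r <= N) && (Q r < c <= P r).

Definition ssyt (N nc : nat) (P Q : nat -> nat) (T : tab) : Prop :=
  [/\ (forall r c, ~~ cell N P Q r c -> T r c = 0),
      (forall r c, cell N P Q r c -> 1 <= T r c <= nc),
      (forall r c c', cell N P Q r c -> cell N P Q r c' -> c <= c' -> T r c <= T r c')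
    & (forall r r' c, cell N P Q r c -> cell N P Q r' c -> r < r' -> T r c < T r' c)].

Definition tle (N : nat) (P Q : nat -> nat) (S T : tab) : Prop :=
  forall r c, cell N P Q r c -> T r c <= S r c.

Definition edge (N nc : nat) (P Q : nat -> nat) (S : tab) (i : nat) (T : tab) : Prop :=
  [/\ ssyt N nc P Q S, ssyt N nc P Q T &
      exists r c, [/\ cell N P Q r c, S r c = (T r c).+1, i = T r c &
        forall r' c', cell N P Q r' c' -> (r', c') <> (r, c) -> S r' c' = T r' c']].

Inductive jcomp (E : tab -> nat -> tab -> Prop) (J : pred nat) (t : tab) : tab -> Prop :=
  | comp_refl : jcomp E J t t
  | comp_step u v i : jcomp E J t u -> J i -> (E u i v \/ E v i u) -> jcomp E J t v.

Inductive dpath (E : tab -> nat -> tab -> Prop) (i : nat) : nat -> tab -> tab -> Prop :=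
  | dpath0 a : dpath E i 0 a a
  | dpathS k a b c : dpath E i k a b -> E b i c -> dpath E i k.+1 a c.

(* the maximum of a set of naturals (0 if it has none) *)
Definition natmax (Pk : nat -> Prop) : nat :=
  epsilon (inhabits 0%N) (fun k => Pk k /\ forall k', Pk k' -> (k' <= k)%N).

Definition rho (E : tab -> nat -> tab -> Prop) (i : nat) (t : tab) : nat :=
  natmax (fun k => exists a, dpath E i k a t).
Definition len (E : tab -> nat -> tab -> Prop) (i : nat) (t : tab) : nat :=
  natmax (fun k => exists a b, jcomp E (pred1 i) t a /\ dpath E i k a b).
Definition weight (E : tab -> nat -> tab -> Prop) (i : nat) (t : tab) : int :=
  (2 * (rho E i t)%:Z - (len E i t)%:Z)%R.

Local Open Scope ring_scope.

Definition garr (N : nat) (P Q : nat -> nat) (T : tab) (p : nat) (j : int) : int :=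
  let rz := (p%:Z + 1 - j)%R in
  let r := `|rz|%N in
  if (0 < rz) && (r <= N)%N then
    ((Q r + count (fun c => T r c <= p) (iota (Q r).+1 (P r - Q r)))%N)%:Z
  else 0.

Definition Cset (N p : nat) : seq int := [seq p%:Z - t%:Z | t <- iota 0 N].

Definition diffpos (N : nat) (gS gT : nat -> int -> int) (i : nat) (j : int) : Prop :=
  [/\ j \in Cset N i, gT i j = gS i j + 1 &
      forall p q, (p, q) <> (i, j) -> gS p q = gT p q].

(* X_{T,S} for an edge S --i--> T with differing position (i,j), g = g(T) *)
Definition Xcoef (N : nat) (g : nat -> int -> int) (i : nat) (j : int) : rat :=
  - (\prod_(k <- Cset N i.+1) ((g i j - g i.+1 k + j - k)%:~R : rat))
  / (\prod_(k <- Cset N i | k != j) ((g i j - g i k + j - k - 1)%:~R : rat)).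

(* Y_{S,T} for an edge S --i--> T with differing position (i,j), g = g(T) *)
Definition Ycoef (N : nat) (g : nat -> int -> int) (i : nat) (j : int) : rat :=
  (\prod_(k <- Cset N i.-1) ((g i j - g i.-1 k + j - k - 1)%:~R : rat))
  / (\prod_(k <- Cset N i | k != j) ((g i j - g i k + j - k)%:~R : rat)).

Definition phiarr (m n : nat) (g : nat -> int -> int) (k : nat) (l : int) : int :=
  if l <= 0 then 0
  else if (1 <= k <= m.-1)%N && (l <= k%:Z) then g 0%N (l - m%:Z)
  else if (m.+1 <= k <= m + n)%N && (l <= k%:Z - m%:Z) then 0
  else if (m <= k <= m + n)%N && (k%:Z - m%:Z + 1 <= l <= k%:Z) then g (k - m)%N (l - m%:Z)
  else 0.

(* Main.v *)
Require Import Defs.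
From HB Require Import structures.
From mathcomp Require Import all_boot all_order all_algebra.
From mathcomp Require Import zify.
Import Order.TTheory GRing.Theory Num.Theory.

Lemma prefix_count (p : pred nat) a len :
  (forall t t', a <= t' <= t -> t < a + len -> p t -> p t') ->
  forall t, a <= t < a + len -> p t = (t < a + count p (iota a len)).
Proof.
elim: len a => [|len IH] a Hcl t Ht; first by lia.
rewrite /=.
have IH' : forall u, a.+1 <= u < a.+1 + len -> p u = (u < a.+1 + count p (iota a.+1 len)).
  apply: IH => u u' Hu Hu'; apply: Hcl; lia.
case Hpa: (p a).
- case: (eqVneq t a) => [->|Hta]; first by rewrite Hpa; lia.
  rewrite IH'; last by lia.
  by rewrite add1n addSn addnS.
- have H0 : forall u, a <= u < a + len.+1 -> p u = false.
    move=> u Hu; apply/negbTE/negP => Hpu.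
    by rewrite (Hcl u a) in Hpa => //; lia.
  rewrite add0n (H0 t Ht).
  have -> : count p (iota a.+1 len) = 0.
    rewrite (@eq_in_count _ _ pred0) ?count_pred0 // => u.
    rewrite mem_iota => Hu; apply: H0; lia.
  lia.
Qed.

Lemma count_true_iota (p : pred nat) a len :
  (forall t, a <= t < a + len -> p t) -> count p (iota a len) = len.
Proof.
move=> H; rewrite (@eq_in_count _ _ predT) ?count_predT ?size_iota //.
by move=> u; rewrite mem_iota => /H.
Qed.

Lemma count_false_iota (p : pred nat) a len :
  (forall t, a <= t < a + len -> ~~ p t) -> count p (iota a len) = 0.
Proof.
move=> H; rewrite (@eq_in_count _ _ pred0) ?count_pred0 //.
by move=> u; rewrite mem_iota => /H /negbTE.
Qed.

Lemma count_le_iota a b : a <= b -> count (fun c => c <= a) (iota 1 b) = a.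
Proof.
move=> Hab; have -> : b = a + (b - a) by lia.
rewrite iotaD count_cat count_true_iota; last by move=> t; lia.
rewrite count_false_iota; last by move=> t; lia.
by rewrite addn0.
Qed.

Lemma mono_dec (m : nat) (Q : nat -> nat) :
  (forall r, 1 <= r < m -> Q r.+1 <= Q r) ->
  forall a b, 1 <= a -> a <= b -> b <= m -> Q b <= Q a.
Proof.
move=> HQ a; elim=> [|b IH] Ha Hab Hbm; first by lia.
case: (eqVneq a b.+1) => [->//|Hne].
apply: leq_trans (HQ b _) (IH Ha _ _); lia.
Qed.
Arguments mono_dec {m Q}.

Definition Pp (m : nat) (P : nat -> nat) (r : nat) : nat := if r <= m then P r else 0.
Definition Q0 (r : nat) : nat := 0.
Definition fill (m : nat) (Q : nat -> nat) (r c : nat) : nat :=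
  r + count (fun s => Q s < c) (iota r.+1 (m - r)).
Definition Fx (m n : nat) (P Q : nat -> nat) (x : tab) : tab := fun r c =>
  if cell (m + n) (Pp m P) Q0 r c then (if c <= Q r then fill m Q r c else x r c + m) else 0.

Lemma cellK m n P r c : cell (m + n) (Pp m P) Q0 r c = (1 <= r <= m) && (0 < c <= P r).
Proof.
rewrite /cell /Pp /Q0; case: (leqP r m) => H.
- by rewrite (_ : r <= m + n) ?andbT //; lia.
- apply/idP/idP; [move=> /andP[_ /andP[H5 H6]]; lia | by move=> /andP[/andP[_ H7] _]; lia].
Qed.

Lemma cellLK m n P Q r c : cell m P Q r c -> cell (m + n) (Pp m P) Q0 r c.
Proof. by rewrite cellK /cell => /andP[-> /andP[H1 ->]]; rewrite andbT; lia. Qed.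
Arguments cellLK {m} n {P Q r c}.

Lemma fill_bounds m Q r c : r <= fill m Q r c <= m + (r - m).
Proof.
rewrite /fill; have := count_size (fun s => Q s < c) (iota r.+1 (m - r)).
rewrite size_iota; lia.
Qed.

Lemma fill_mono m Q r c c' : c <= c' -> fill m Q r c <= fill m Q r c'.
Proof.
move=> H; rewrite /fill leq_add2l; apply: sub_count => s /=; lia.
Qed.

Section Fill.
Variables (m : nat) (Q : nat -> nat).
Hypothesis HQ : forall r, 1 <= r < m -> Q r.+1 <= Q r.

Lemma fill_col r r' c : 1 <= r -> r < r' -> r' <= m -> c <= Q r' ->
  fill m Q r c < fill m Q r' c.
Proof.
move=> H1 H2 H3 H4; rewrite /fill.
have -> : m - r = (r' - r) + (m - r') by lia.
rewrite iotaD count_cat count_false_iota; last first.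
  move=> t Ht; have := mono_dec HQ t r' ltac:(lia) ltac:(lia) H3; lia.
have -> : r.+1 + (r' - r) = r'.+1 by lia.
lia.
Qed.

Lemma fill_char r c k : 1 <= r <= m -> k < m ->
  (fill m Q r c <= k) = (r <= k) && (c <= Q (r + m - k)).
Proof.
move=> Hr Hk; case: (leqP r k) => Hrk /=; last first.
  by apply/negbTE; have := fill_bounds m Q r c; lia.
set p := fun s => c <= Q s.
have Hcnt : count (fun s => Q s < c) (iota r.+1 (m - r)) =
            (m - r) - count p (iota r.+1 (m - r)).
  have := count_predC p (iota r.+1 (m - r)); rewrite size_iota.
  have -> : count (predC p) (iota r.+1 (m - r)) = count (fun s => Q s < c) (iota r.+1 (m - r)).
    by apply: eq_count => s; rewrite /= /p -ltnNge.
  lia.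
have Hpre := @prefix_count p r.+1 (m - r).
have Hs := Hpre _ (r + m - k).
rewrite /p in Hs *; rewrite /fill Hcnt Hs; last by lia.
- have := count_size p (iota r.+1 (m - r)); rewrite size_iota /p.
  set A := count _ _; move=> HA.
  apply/idP/idP; lia.
- move=> t t' Ht Ht' Hq; apply: leq_trans Hq _; apply: (mono_dec HQ); lia.
Qed.
End Fill.
Arguments fill_col {m Q}.
Arguments fill_char {m Q}.

Section FK.
Variables (m n : nat) (P Q : nat -> nat).
Hypothesis HP : forall r, 1 <= r < m -> P r.+1 <= P r.
Hypothesis HQ : forall r, 1 <= r < m -> Q r.+1 <= Q r.
Hypothesis HQP : forall r, 1 <= r <= m -> Q r <= P r.

Lemma Fx_ssyt x : ssyt m n P Q x -> ssyt (m + n) (m + n) (Pp m P) Q0 (Fx m n P Q x).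
Proof.
case=> [X0 X1 X2 X3]; rewrite /Fx; split.
- by move=> r c /negbTE ->.
- move=> r c Hc; rewrite Hc; move: Hc; rewrite cellK => /andP[Hr Hc].
  case: ifP => Hq.
  + have := fill_bounds m Q r c; lia.
  + have : cell m P Q r c by rewrite /cell Hr /=; lia.
    move/X1; lia.
- move=> r c c' Hc Hc' Hcc; rewrite Hc Hc'; move: Hc Hc'; rewrite !cellK.
  move=> /andP[Hr Hc] /andP[_ Hc'].
  case: ifP => Hq; case: ifP => Hq'.
  + exact: fill_mono.
  + have : cell m P Q r c' by rewrite /cell Hr /=; lia.
    move/X1; have := fill_bounds m Q r c; lia.
  + lia.
  + rewrite leq_add2r; apply: X2 => //; rewrite /cell Hr /=; lia.
- move=> r r' c Hc Hc' Hrr; rewrite Hc Hc'; move: Hc Hc'; rewrite !cellK.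
  move=> /andP[Hr Hc] /andP[Hr' Hc'].
  case: ifP => Hq; case: ifP => Hq'.
  + apply: (fill_col HQ) => //; lia.
  + have : cell m P Q r' c by rewrite /cell Hr' /=; lia.
    move/X1; have := fill_bounds m Q r c; lia.
  + have := mono_dec HQ r r' ltac:(lia) ltac:(lia) ltac:(lia); lia.
  + rewrite ltn_add2r; apply: X3 => //; rewrite /cell ?Hr ?Hr' /=; lia.
Qed.
End FK.
Arguments Fx_ssyt {m} n {P Q}.

Lemma garrE N P Q T p r :
  garr N P Q T p ((Posz p) + 1 - (Posz r))%R =
  if (0 < r) && (r <= N) then Posz (Q r + count (fun c => T r c <= p) (iota (Q r).+1 (P r - Q r)))%N
  else 0%R.
Proof.
rewrite /garr; have -> : ((Posz p) + 1 - ((Posz p) + 1 - (Posz r)))%R = (Posz r) by lia.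
by rewrite ltz_nat.
Qed.

Lemma CsetP N k l : l \in Cset N k -> exists r, 1 <= r <= N /\ l = ((Posz k) + 1 - (Posz r))%R.
Proof.
case/mapP=> t; rewrite mem_iota => Ht ->; exists t.+1; split; first lia.
lia.
Qed.

Lemma CsetI N k r : 1 <= r <= N -> ((Posz k) + 1 - (Posz r))%R \in Cset N k.
Proof.
move=> Hr; apply/mapP; exists r.-1; first by rewrite mem_iota; lia.
lia.
Qed.

Lemma phiarrE m n g k r : 1 <= r -> k <= m + n ->
  phiarr m n g k ((Posz k) + 1 - (Posz r))%R =
  if k < r then 0%R
  else if k < m then g 0 (Posz 0 + 1 - (Posz (r + m - k)%N))%R
  else if m < r then 0%R
  else g (k - m) ((Posz (k - m)%N) + 1 - (Posz r))%R.
Proof.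
move=> Hr Hk; rewrite /phiarr.
case: (ltnP k r) => H1.
  by rewrite ifT //; lia.
rewrite ifF; last by lia.
case: (ltnP k m) => H2.
  rewrite ifT; last by apply/andP; split; lia.
  congr g; lia.
rewrite ifF; last by apply/negbTE/negP => /andP[]; lia.
case: (ltnP m r) => H3.
  by rewrite ifT //; apply/andP; split; lia.
rewrite ifF; last by apply/negbTE/negP => /andP[]; lia.
rewrite ifT; last by apply/andP; split; apply/andP; split; lia.
congr g; lia.
Qed.

From Stdlib Require Import FunctionalExtensionality PropExtensionality.

Lemma tab_eq N P Q T1 T2 : ssyt N N P Q T1 -> ssyt N N P Q T2 ->
  (forall k l, k <= N -> l \in Cset N k -> garr N P Q T1 k l = garr N P Q T2 k l) -> T1 = T2.
Proof.
move=> [A0 A1 A2 A3] [B0 B1 B2 B3] H.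
apply: functional_extensionality => r; apply: functional_extensionality => c.
case Hc: (cell N P Q r c); last by rewrite A0 ?B0 ?Hc.
have Hc' := Hc; move: Hc'; rewrite /cell => /andP[Hr Hcr].
have key : forall p, p <= N -> (T1 r c <= p) = (T2 r c <= p).
  move=> p Hp.
  have := H p _ Hp (@CsetI N p r Hr); rewrite !garrE.
  rewrite ifT; last by apply/andP; split; lia.
  rewrite ifT; last by apply/andP; split; lia.
  move=> [] /addnI Heq.
  rewrite (@prefix_count (fun c => T1 r c <= p) (Q r).+1 (P r - Q r)); last by lia.
    rewrite (@prefix_count (fun c => T2 r c <= p) (Q r).+1 (P r - Q r)); last by lia.
      by rewrite Heq.
    move=> t t' Ht Ht' /= Hle; apply: leq_trans Hle; apply: B2; rewrite /cell; lia.
  move=> t t' Ht Ht' /= Hle; apply: leq_trans Hle; apply: A2; rewrite /cell; lia.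
apply/eqP; rewrite eqn_leq; apply/andP; split.
- have := B1 _ _ Hc; move=> /andP[_ HB]; by rewrite key // leqnn.
- have := A1 _ _ Hc; move=> /andP[_ HA]; by rewrite -key // leqnn.
Qed.

Section FKG.
Variables (m n : nat) (P Q : nat -> nat).
Hypothesis HP : forall r, 1 <= r < m -> P r.+1 <= P r.
Hypothesis HQ : forall r, 1 <= r < m -> Q r.+1 <= Q r.
Hypothesis HQP : forall r, 1 <= r <= m -> Q r <= P r.

Lemma Fx_garr x : ssyt m n P Q x -> forall k l, k <= m + n -> l \in Cset (m + n) k ->
  garr (m + n) (Pp m P) Q0 (Fx m n P Q x) k l = phiarr m n (garr m P Q x) k l.
Proof.
case=> [X0 X1 X2 X3] k l Hk /CsetP [r [Hr ->]].
rewrite garrE phiarrE; [|lia|lia].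
rewrite ifT; last by apply/andP; split; lia.
rewrite /Q0 subn0 add0n.
case: (ltnP m r) => Hrm.
  rewrite /Pp ifF; last by lia.
  rewrite /=; case: ifP => // Hkr; rewrite ifF; last by lia.
  by [].
rewrite /Pp ifT //.
have HQPr := HQP r ltac:(lia).
have -> : P r = Q r + (P r - Q r) by lia.
rewrite iotaD count_cat add1n.
rewrite (@eq_in_count _ _ (fun c => fill m Q r c <= k)); last first.
  move=> c; rewrite mem_iota => Hc; rewrite /Fx cellK ifT; last by apply/andP; split; lia.
  by rewrite ifT //; lia.
rewrite (@eq_in_count _ (fun c => Fx m n P Q x r c <= k) (fun c => x r c + m <= k)); last first.
  move=> c; rewrite mem_iota => Hc; rewrite /Fx cellK ifT; last by apply/andP; split; lia.
  by rewrite ifF //; lia.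
have Hcell : forall c, Q r < c <= P r -> cell m P Q r c.
  by move=> c Hc; rewrite /cell; lia.
have Hcell' : forall r' c, 1 <= r' <= m -> Q r' < c <= P r' -> cell m P Q r' c.
  by move=> r' c ? ?; rewrite /cell; lia.
case: (ltnP k m) => Hkm.
- rewrite (@count_false_iota _ (Q r).+1); last by move=> t Ht; lia.
  rewrite (@eq_in_count _ _ (fun c => (r <= k) && (c <= Q (r + m - k)))); last first.
    by move=> c _; rewrite (fill_char HQ) //; lia.
  case: (ltnP k r) => Hkr.
    by rewrite count_false_iota // => t _; rewrite /=; lia.
  rewrite /= count_le_iota; last first.
    apply: (mono_dec HQ); lia.
  rewrite garrE ifT; last by apply/andP; split; lia.
  rewrite count_false_iota ?addn0 ?addn0 //.
  move=> t Ht; have := HQP (r + m - k) ltac:(lia).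
  move=> Hq; have := X1 (r + m - k) t (Hcell' (r + m - k) t ltac:(lia) ltac:(lia)); lia.
- rewrite count_true_iota; last first.
    by move=> t Ht /=; have := fill_bounds m Q r t; lia.
  rewrite (@eq_count _ _ (fun c => x r c <= k - m)); last by move=> c /=; lia.
  rewrite ifF; last by lia.
  rewrite garrE ifT; last by lia.
  congr Posz; lia.
Qed.
End FKG.

Definition meas R C (x : tab) := \sum_(r <- iota 0 R) \sum_(c <- iota 0 C) x r c.

Lemma meas_pt R C x y r0 c0 : r0 < R -> c0 < C ->
  (forall r c, (r, c) <> (r0, c0) -> x r c = y r c) -> x r0 c0 = (y r0 c0).+1 ->
  meas R C x = (meas R C y).+1.
Proof.
move=> HR HC H Hx; rewrite /meas.
rewrite (bigD1_seq r0); [|by rewrite mem_iota; lia|exact: iota_uniq].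
rewrite [in RHS](bigD1_seq r0); [|by rewrite mem_iota; lia|exact: iota_uniq].
rewrite (bigD1_seq c0); [|by rewrite mem_iota; lia|exact: iota_uniq].
rewrite [in RHS](bigD1_seq c0); [|by rewrite mem_iota; lia|exact: iota_uniq].
have E1 : \sum_(c <- iota 0 C | c != c0) x r0 c = \sum_(c <- iota 0 C | c != c0) y r0 c.
  by apply: eq_bigr => c Hc; apply: H => -[Hcc]; rewrite Hcc eqxx in Hc.
have E2 : \sum_(r <- iota 0 R | r != r0) \sum_(c <- iota 0 C) x r c =
          \sum_(r <- iota 0 R | r != r0) \sum_(c <- iota 0 C) y r c.
  apply: eq_bigr => r Hr; apply: eq_bigr => c _; apply: H => -[Hrr _].
  by rewrite Hrr eqxx in Hr.
by rewrite E1 E2 Hx /= !addSn.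
Qed.

From Stdlib Require Import Classical.

Section Edges.
Variables (m n : nat) (P Q : nat -> nat).
Hypothesis HP : forall r, 1 <= r < m -> P r.+1 <= P r.
Hypothesis HQ : forall r, 1 <= r < m -> Q r.+1 <= Q r.
Hypothesis HQP : forall r, 1 <= r <= m -> Q r <= P r.

Local Notation F := (Fx m n P Q).
Local Notation KK := (ssyt (m + n) (m + n) (Pp m P) Q0).
Local Notation LL := (ssyt m n P Q).
Local Notation EK := (edge (m + n) (m + n) (Pp m P) Q0).
Local Notation EL := (edge m n P Q).

Lemma FxL x r c : cell m P Q r c -> F x r c = x r c + m.
Proof.
move=> Hc; have := cellLK n Hc; rewrite /Fx => ->; rewrite ifF //.
move: Hc; rewrite /cell; lia.
Qed.

Lemma FxQ x r c : cell (m + n) (Pp m P) Q0 r c -> c <= Q r -> F x r c = fill m Q r c.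
Proof. by rewrite /Fx => -> ->. Qed.

Lemma cellKL {r c} : cell (m + n) (Pp m P) Q0 r c -> Q r < c -> cell m P Q r c.
Proof. rewrite cellK /cell; lia. Qed.

Lemma fill_le_m {r c} : cell (m + n) (Pp m P) Q0 r c -> fill m Q r c <= m.
Proof. rewrite cellK => Hc; have := fill_bounds m Q r c; lia. Qed.

Lemma hFx x : LL x -> forall r c, cell (m + n) (Pp m P) Q0 r c ->
  if c <= Q r then F x r c = fill m Q r c else m < F x r c.
Proof.
case=> [X0 X1 X2 X3] r c Hc; case: ifP => Hq; first exact: FxQ.
have HL : cell m P Q r c by apply: cellKL; lia.
rewrite FxL //; have := X1 _ _ HL; lia.
Qed.

Lemma Fx_inj {x y} : LL x -> LL y -> F x = F y -> x = y.
Proof.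
case=> [X0 X1 X2 X3] [Y0 Y1 Y2 Y3] H.
apply: functional_extensionality => r; apply: functional_extensionality => c.
case Hc: (cell m P Q r c); last by rewrite X0 ?Y0 ?Hc.
have := f_equal (fun f => f r c) H; rewrite /=; rewrite !FxL //; lia.
Qed.

Lemma edge_equiv S T i : LL S -> LL T -> (EL S i T <-> EK (F S) (i + m) (F T)).
Proof.
move=> LS LT; split.
- case=> _ _ [r [c [Hc HST Hi Hoth]]]; split; try exact: (Fx_ssyt n HQ).
  exists r, c; split.
  + exact: (cellLK n Hc).
  + rewrite !FxL // HST; lia.
  + by rewrite FxL // Hi.
  + move=> r' c' Hc' Hne; rewrite /Fx Hc'; case: ifP => // Hq.
    rewrite Hoth //; apply: cellKL => //; lia.
- case=> _ _ [r [c [Hc HST Hi Hoth]]]; split => //.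
  have Hq : Q r < c.
    rewrite ltnNge; apply/negP => Hq; move: HST; rewrite !FxQ //; lia.
  have HL := cellKL Hc Hq.
  exists r, c; split => //.
  + move: HST; rewrite !FxL //; lia.
  + move: Hi; rewrite !FxL //; lia.
  + move=> r' c' Hc' Hne; have := Hoth r' c' (cellLK n Hc') Hne; rewrite !FxL //; lia.
Qed.

Lemma img w : KK w -> (forall r c, cell (m + n) (Pp m P) Q0 r c ->
    if c <= Q r then w r c = fill m Q r c else m < w r c) ->
  exists y, LL y /\ w = F y.
Proof.
case=> [W0 W1 W2 W3] Hw.
pose y := fun r c => if cell m P Q r c then w r c - m else 0.
have Hgt : forall r c, cell m P Q r c -> m < w r c.
  move=> r c Hc; have := Hw r c (cellLK n Hc); rewrite ifF //.
  move: Hc; rewrite /cell; lia.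
exists y; split.
- split.
  + by move=> r c /negbTE Hc; rewrite /y Hc.
  + move=> r c Hc; rewrite /y Hc; have := Hgt _ _ Hc; have := W1 _ _ (cellLK n Hc).
    move: Hc; rewrite /cell; lia.
  + move=> r c c' Hc Hc' Hcc; rewrite /y Hc Hc'.
    have := W2 _ _ _ (cellLK n Hc) (cellLK n Hc') Hcc; lia.
  + move=> r r' c Hc Hc' Hrr; rewrite /y Hc Hc'.
    have := W3 _ _ _ (cellLK n Hc) (cellLK n Hc') Hrr; have := Hgt _ _ Hc; lia.
- apply: functional_extensionality => r; apply: functional_extensionality => c.
  rewrite /Fx; case Hc: (cell (m + n) (Pp m P) Q0 r c); last by rewrite W0 ?Hc.
  have := Hw r c Hc; case: ifP => Hq // Hgt'.
  rewrite /y.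
  have HL' : cell m P Q r c by apply: cellKL => //; lia.
  rewrite HL'; lia.
Qed.

Lemma closure_fw {u col v x} : m < col -> EK u col v -> LL x -> u = F x -> exists y, LL y /\ v = F y.
Proof.
move=> Hm [Ku Kv [r0 [c0 [Hc0 Huv Hcol Hoth]]]] Lx Hu.
apply: img => // r c Hc.
case: (eqVneq (r, c) (r0, c0)) => [[-> ->]|Hne].
- have Hq : Q r0 < c0.
    rewrite ltnNge; apply/negP => Hq; move: Huv; rewrite Hu FxQ //.
    have := fill_le_m Hc0; lia.
  rewrite ifF; lia.
- rewrite -Hoth //; last exact/eqP.
  rewrite Hu; exact: hFx.
Qed.

Lemma closure_bw {u col v x} : m < col -> EK u col v -> LL x -> v = F x -> exists y, LL y /\ u = F y.
Proof.
move=> Hm [Ku Kv [r0 [c0 [Hc0 Huv Hcol Hoth]]]] Lx Hv.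
apply: img => // r c Hc.
case: (eqVneq (r, c) (r0, c0)) => [[-> ->]|Hne].
- have Hq : Q r0 < c0.
    rewrite ltnNge; apply/negP => Hq; move: Hcol; rewrite Hv FxQ //.
    have := fill_le_m Hc0; lia.
  rewrite ifF; lia.
- rewrite Hoth //; last exact/eqP.
  rewrite Hv; exact: hFx.
Qed.

Lemma connect_L M : LL M -> (forall x, LL x -> tle m P Q x M) ->
  forall x, LL x -> jcomp EK (fun k => m.+1 <= k <= m + n - 1) (F M) (F x).
Proof.
move=> LM HM x0 Lx0.
suff : forall d x, LL x -> meas m.+1 (P 1).+1 x < d ->
  jcomp EK (fun k => m.+1 <= k <= m + n - 1) (F M) (F x) by apply; [exact: Lx0| exact: ltnSn].
elim=> [|d IH] x Lx Hd; first by lia.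
case: (classic (exists r c, cell m P Q r c /\ M r c < x r c)) => [[r1 [c1 [Hc1 Hlt1]]]|Hno]; last first.
  have -> : x = M; last exact: comp_refl.
  case: Lx => [X0 X1 X2 X3]; case: LM => [M0 M1 M2 M3].
  apply: functional_extensionality => r; apply: functional_extensionality => c.
  case Hc: (cell m P Q r c); last by rewrite X0 ?M0 ?Hc.
  have := HM x ltac:(by split) r c Hc.
  case: (ltnP (M r c) (x r c)) => H1 H2; last by lia.
  by exfalso; apply: Hno; exists r, c.
pose pr := fun r => has (fun c => cell m P Q r c && (M r c < x r c)) (iota 0 (P r).+1).
have exr : exists r, pr r.
  exists r1; apply/hasP; exists c1; last by rewrite Hc1 Hlt1.
  by rewrite mem_iota; move: Hc1; rewrite /cell; lia.
case: (ex_minnP exr) => r0 Hr0 Hmin0.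
case/hasP: Hr0 => cw _ Hcw.
have exc : exists c, cell m P Q r0 c && (M r0 c < x r0 c) by exists cw.
case: (ex_minnP exc) => c0 /andP[Hc0 Hlt0] Hminc.
pose y := fun r c => if (r == r0) && (c == c0) then (x r c).-1 else x r c.
have Lx' := Lx.
case: Lx' => [X0 X1 X2 X3]; case: (LM) => [M0 M1 M2 M3].
have HM1 := M1 _ _ Hc0; have HX1 := X1 _ _ Hc0.
have Ly : LL y.
  split.
  - move=> r c Hnc; rewrite /y; case: ifP => [/andP[/eqP Hr /eqP Hc]|_]; last exact: X0.
    by subst; rewrite Hc0 in Hnc.
  - move=> r c Hc; rewrite /y; case: ifP => [/andP[/eqP Hr /eqP Hcc]|_]; last exact: X1.
    subst; lia.
  - move=> r c c2 Hc Hc2 Hcc; rewrite /y.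
    case: ifP => E1; case: ifP => E2.
    + move/andP: E1 => [/eqP -> /eqP ->]; move/andP: E2 => [_ /eqP ->]; by [].
    + move/andP: E1 => [/eqP Hr /eqP Hc1']; subst; have := X2 _ _ _ Hc Hc2 Hcc; lia.
    + move/andP: E2 => [/eqP Hr /eqP Hc2']; subst.
      have Hne : c != c0 by apply/negP => /eqP Hcc'; rewrite Hcc' !eqxx in E1.
      have := X2 _ _ _ Hc Hc2 Hcc.
      case Hxx: (M r0 c < x r0 c).
        by have := Hminc c (introT andP (conj Hc Hxx)); lia.
      have := M2 _ _ _ Hc Hc2 Hcc; lia.
    + exact: X2.
  - move=> r r' c Hc Hc' Hrr; rewrite /y.
    case: ifP => E1; case: ifP => E2.
    + move/andP: E1 => [/eqP Hr _]; move/andP: E2 => [/eqP Hr' _]; lia.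
    + move/andP: E1 => [/eqP Hr /eqP Hc1']; subst; have := X3 _ _ _ Hc Hc' Hrr; lia.
    + move/andP: E2 => [/eqP Hr /eqP Hc2']; subst.
      have := X3 _ _ _ Hc Hc' Hrr.
      case Hxx: (M r c0 < x r c0).
        have : pr r.
          apply/hasP; exists c0; last by rewrite Hc Hxx.
          by rewrite mem_iota; move: Hc; rewrite /cell; lia.
        by move/Hmin0; lia.
      have := M3 _ _ _ Hc Hc' Hrr; lia.
    + exact: X3.
have Hyne : forall r c, (r, c) <> (r0, c0) -> x r c = y r c.
  move=> r c Hne; rewrite /y ifF //; apply/negbTE/negP => /andP[/eqP Hr /eqP Hc].
  by apply: Hne; rewrite Hr Hc.
have Hy0 : y r0 c0 = (x r0 c0).-1 by rewrite /y !eqxx.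
have Exy : EL x (x r0 c0).-1 y.
  split => //; exists r0, c0; split => //.
  - rewrite Hy0; lia.
  - by move=> r c _ Hne; apply: Hyne.
have Hmeas : meas m.+1 (P 1).+1 x = (meas m.+1 (P 1).+1 y).+1.
  have Hr0m : r0 < m.+1 by move: Hc0; rewrite /cell; lia.
  have Hc0P : c0 < (P 1).+1.
    have := mono_dec HP 1 r0; move: (Hc0); rewrite /cell => Hc0' Hm.
    have := Hm ltac:(lia) ltac:(lia) ltac:(lia); lia.
  apply: (@meas_pt _ _ x y r0 c0 Hr0m Hc0P Hyne); rewrite Hy0; lia.
have Hj := IH y Ly ltac:(lia).
apply: (comp_step (i := (x r0 c0).-1 + m) Hj); first by rewrite /=; lia.
right; apply/edge_equiv => //.
Qed.

Definition isimg (t : tab) := exists y, LL y /\ t = F y.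

Lemma dpath_end {c k a b} : m < c -> dpath EK c k a b -> isimg b -> isimg a.
Proof.
move=> Hc; elim=> // {}k a0 b0 c0 Hp IH He [y [Ly Hy]].
apply: IH; exact: (closure_bw Hc He Ly Hy).
Qed.

Lemma dpath_start {c k a b} : m < c -> dpath EK c k a b -> isimg a -> isimg b.
Proof.
move=> Hc; elim=> // {}k a0 b0 c0 Hp IH He Ha.
case: (IH Ha) => z [Lz Hz]; exact: (closure_fw Hc He Lz Hz).
Qed.

Lemma dpath_K2L {i k a b} : 1 <= i -> dpath EK (i + m) k a b ->
  forall x y, LL x -> LL y -> a = F x -> b = F y -> dpath EL i k x y.
Proof.
move=> Hi; elim=> [a0|{}k a0 b0 c0 Hp IH He] x y Lx Ly Ha Hb.
- by rewrite (Fx_inj Lx Ly (etrans (esym Ha) Hb)); constructor.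
- case: (closure_bw (_ : m < i + m) He Ly Hb) => [|z [Lz Hz]]; first lia.
  apply: (dpathS (IH x z Lx Lz Ha Hz)).
  apply/edge_equiv => //; by rewrite -Hz -Hb.
Qed.

Lemma dpath_L2K i k x y : dpath EL i k x y -> dpath EK (i + m) k (F x) (F y).
Proof.
elim=> [a0|{}k a0 b0 c0 Hp IH He]; first by constructor.
apply: (dpathS IH); case: (He) => Lb Lc _; exact/edge_equiv.
Qed.

Lemma jcomp_img {J : pred nat} {t a} : (forall j, J j -> m < j) -> jcomp EK J t a -> isimg t -> isimg a.
Proof.
move=> HJ; elim=> // u v j Hj IH Jj He Ht.
case: (IH Ht) => z [Lz Hz].
case: He => He; [exact: (closure_fw (HJ _ Jj) He Lz Hz) | exact: (closure_bw (HJ _ Jj) He Lz Hz)].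
Qed.

Lemma jcomp_K2L {i x a} : 1 <= i -> LL x -> jcomp EK (pred1 (i + m)) (F x) a ->
  forall z, LL z -> a = F z -> jcomp EL (pred1 i) x z.
Proof.
move=> Hi Lx; elim=> [|u v j Hj IH Jj He] z Lz Ha.
- by rewrite (Fx_inj Lx Lz Ha); constructor.
- move/eqP: Jj => Jj; subst j.
  have Hm : m < i + m by lia.
  have [w [Lw Hw]] : isimg u.
    case: He => He; [exact: (closure_bw Hm He Lz Ha) | exact: (closure_fw Hm He Lz Ha)].
  apply: (comp_step (i := i) (IH w Lw Hw)); first by rewrite /= eqxx.
  rewrite Hw Ha in He; case: He => He; [left|right]; exact/edge_equiv.
Qed.

Lemma jcomp_L2K i x z : jcomp EL (pred1 i) x z -> jcomp EK (pred1 (i + m)) (F x) (F z).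
Proof.
elim=> [|u v j Hj IH Jj He]; first by constructor.
move/eqP: Jj => Jj; subst j.
apply: (comp_step (i := i + m) IH); first by rewrite /= eqxx.
case: He => He; case: (He) => L1 L2 _; [left|right]; exact/edge_equiv.
Qed.

Lemma rho_eq i x : 1 <= i -> LL x -> rho EK (i + m) (F x) = rho EL i x.
Proof.
move=> Hi Lx; rewrite /rho; congr natmax.
apply: functional_extensionality => k; apply: propositional_extensionality; split.
- case=> a Hp; have Hm : m < i + m by lia.
  have [w [Lw Hw]] := dpath_end Hm Hp (ex_intro _ x (conj Lx erefl)).
  exists w; exact: (dpath_K2L Hi Hp w x Lw Lx Hw erefl).
- case=> a Hp; exists (F a); exact: dpath_L2K.
Qed.

Lemma len_eq i x : 1 <= i -> LL x -> len EK (i + m) (F x) = len EL i x.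
Proof.
move=> Hi Lx; rewrite /len; congr natmax.
apply: functional_extensionality => k; apply: propositional_extensionality; split.
- case=> a [b [Hj Hp]].
  have Hm : m < i + m by lia.
  have HJ : forall j, pred1 (i + m) j -> m < j by move=> j /eqP ->.
  have [w [Lw Hw]] := jcomp_img HJ Hj (ex_intro _ x (conj Lx erefl)).
  have Hp' := Hp; rewrite Hw in Hp'.
  have [z [Lz Hz]] := dpath_start Hm Hp (ex_intro _ w (conj Lw Hw)).
  exists w, z; split; first exact: (jcomp_K2L Hi Lx Hj w Lw Hw).
  exact: (dpath_K2L Hi Hp w z Lw Lz Hw Hz).
- case=> a [b [Hj Hp]]; exists (F a), (F b); split; [exact: jcomp_L2K | exact: dpath_L2K].
Qed.
End Edges.

Section XY.
Local Open Scope ring_scope.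
Variables (m n : nat) (g g' : nat -> int -> int).
Hypothesis Hg' : forall k l, (k <= m + n)%N -> l \in Cset (m + n) k -> g' k l = phiarr m n g k l.

Lemma gK p t : (m <= p <= m + n)%N -> (t < m + n)%N ->
  g' p (Posz p - Posz t) = if (m <= t)%N then 0 else g (p - m)%N (Posz (p - m)%N - Posz t).
Proof.
move=> Hp Ht; rewrite Hg'; [|lia|by apply/mapP; exists t; rewrite ?mem_iota //; lia].
have -> : Posz p - Posz t = Posz p + 1 - Posz t.+1 by lia.
rewrite phiarrE; [|lia|lia].
case: (ltnP p t.+1) => H1; first by rewrite ifT //; lia.
rewrite ifF; last by lia.
case: (leqP m t) => H2; first by rewrite ifT //; lia.
rewrite ifF; last by lia.
congr g; lia.
Qed.

Lemma cancel_e (a b e : rat) : e != 0 -> (a * e) / (b * e) = a / b.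
Proof. by move=> He; rewrite invfM mulrACA divff // mulr1. Qed.

Lemma XY_eq i j j' : (1 <= i)%N -> (i + 1 <= n)%N -> j \in Cset m i -> j' = j + Posz m ->
  0 < g i j ->
  Xcoef (m + n) g' (i + m) j' = Xcoef m g i j /\ Ycoef (m + n) g' (i + m) j' = Ycoef m g i j.
Proof.
move=> Hi Hin /mapP [t0 Ht0 Hj] Hj' Hg; rewrite mem_iota in Ht0.
have Gv : g' (i + m)%N j' = g i j.
  have -> : j' = Posz (i + m)%N - Posz t0 by lia.
  rewrite gK; [|lia|lia]; rewrite ifF; last by lia.
  rewrite Hj; congr g; [lia|lia].
rewrite /Xcoef /Ycoef Gv.
set E1 := \prod_(t <- iota m n) (((g i j + j - Posz i - 1 + Posz t) : int)%:~R : rat).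
set E2 := \prod_(t <- iota m n) (((g i j + j - Posz i + Posz t) : int)%:~R : rat).
have E1n : E1 != 0.
  rewrite prodf_seq_neq0; apply/allP => t; rewrite mem_iota => Ht /=.
  rewrite intr_eq0; lia.
have E2n : E2 != 0.
  rewrite prodf_seq_neq0; apply/allP => t; rewrite mem_iota => Ht /=.
  rewrite intr_eq0; lia.
have XN : \prod_(k <- Cset (m + n) (i + m).+1) ((g i j - g' (i + m).+1 k + j' - k)%:~R : rat) =
  (\prod_(k <- Cset m i.+1) ((g i j - g i.+1 k + j - k)%:~R : rat)) * E1.
  rewrite /Cset !big_map iotaD big_cat add0n; congr (_ * _).
  - apply: eq_big_seq => t; rewrite mem_iota => Ht.
    rewrite gK; [|lia|lia]; rewrite ifF; last by lia.
    have -> : ((i + m).+1 - m)%N = i.+1 by lia.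
    congr (_%:~R); lia.
  - apply: eq_big_seq => t; rewrite mem_iota => Ht.
    rewrite gK; [|lia|lia]; rewrite ifT; last by lia.
    congr (_%:~R); lia.
have XD : \prod_(k <- Cset (m + n) (i + m) | k != j') ((g i j - g' (i + m)%N k + j' - k - 1)%:~R : rat) =
  (\prod_(k <- Cset m i | k != j) ((g i j - g i k + j - k - 1)%:~R : rat)) * E1.
  rewrite /Cset !big_map iotaD big_cat add0n; congr (_ * _).
  - rewrite big_seq_cond [RHS]big_seq_cond; apply: eq_big => t.
      apply/andP/andP => -[H1 H2]; split => //; apply/eqP => H3; move/eqP: H2; apply; lia.
    move=> /andP[Ht _]; rewrite mem_iota in Ht.
    rewrite gK; [|lia|lia]; rewrite ifF; last by lia.
    have -> : ((i + m) - m)%N = i by lia.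
    congr (_%:~R); lia.
  - rewrite big_seq_cond [RHS]big_seq; apply: eq_big => t.
      case Ht: (t \in iota m n) => //=; rewrite mem_iota in Ht; apply/eqP; lia.
    move=> /andP[Ht _]; rewrite mem_iota in Ht.
    rewrite gK; [|lia|lia]; rewrite ifT; last by lia.
    congr (_%:~R); lia.
have YN : \prod_(k <- Cset (m + n) (i + m).-1) ((g i j - g' (i + m).-1 k + j' - k - 1)%:~R : rat) =
  (\prod_(k <- Cset m i.-1) ((g i j - g i.-1 k + j - k - 1)%:~R : rat)) * E2.
  rewrite /Cset !big_map iotaD big_cat add0n; congr (_ * _).
  - apply: eq_big_seq => t; rewrite mem_iota => Ht.
    rewrite gK; [|lia|lia]; rewrite ifF; last by lia.
    have -> : ((i + m).-1 - m)%N = i.-1 by lia.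
    congr (_%:~R); lia.
  - apply: eq_big_seq => t; rewrite mem_iota => Ht.
    rewrite gK; [|lia|lia]; rewrite ifT; last by lia.
    congr (_%:~R); lia.
have YD : \prod_(k <- Cset (m + n) (i + m) | k != j') ((g i j - g' (i + m)%N k + j' - k)%:~R : rat) =
  (\prod_(k <- Cset m i | k != j) ((g i j - g i k + j - k)%:~R : rat)) * E2.
  rewrite /Cset !big_map iotaD big_cat add0n; congr (_ * _).
  - rewrite big_seq_cond [RHS]big_seq_cond; apply: eq_big => t.
      apply/andP/andP => -[H1 H2]; split => //; apply/eqP => H3; move/eqP: H2; apply; lia.
    move=> /andP[Ht _]; rewrite mem_iota in Ht.
    rewrite gK; [|lia|lia]; rewrite ifF; last by lia.
    have -> : ((i + m) - m)%N = i by lia.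
    congr (_%:~R); lia.
  - rewrite big_seq_cond [RHS]big_seq; apply: eq_big => t.
      case Ht: (t \in iota m n) => //=; rewrite mem_iota in Ht; apply/eqP; lia.
    move=> /andP[Ht _]; rewrite mem_iota in Ht.
    rewrite gK; [|lia|lia]; rewrite ifT; last by lia.
    congr (_%:~R); lia.
split.
- by rewrite XN XD -mulNr cancel_e // mulNr.
- by rewrite YN YD cancel_e.
Qed.
End XY.

Lemma garr_ge0 N P Q T p j : (0 <= garr N P Q T p j)%R.
Proof. by rewrite /garr; case: ifP. Qed.

Lemma main (m n : nat) (P Q : nat -> nat)
  (Hn : 2 <= n) (Hnm : n <= m)
  (HP : forall r, 1 <= r < m -> P r.+1 <= P r)
  (HQ : forall r, 1 <= r < m -> Q r.+1 <= Q r)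
  (HQP : forall r, 1 <= r <= m -> Q r <= P r)
  (Hcol : forall c, count (fun r => cell m P Q r c) (iota 1 m) <= n) :
  (forall x, ssyt m n P Q x -> exists y, ssyt (m + n) (m + n) (Pp m P) Q0 y /\
     forall k l, k <= m + n -> l \in Cset (m + n) k ->
       garr (m + n) (Pp m P) Q0 y k l = phiarr m n (garr m P Q x) k l) /\
  forall phi : tab -> tab,
    (forall x, ssyt m n P Q x -> ssyt (m + n) (m + n) (Pp m P) Q0 (phi x) /\
       forall k l, k <= m + n -> l \in Cset (m + n) k ->
         garr (m + n) (Pp m P) Q0 (phi x) k l = phiarr m n (garr m P Q x) k l) ->
    [/\ forall x y, ssyt m n P Q x -> ssyt m n P Q y -> phi x = phi y -> x = y,
        forall S T i, ssyt m n P Q S -> ssyt m n P Q T ->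
          (edge m n P Q S i T <-> edge (m + n) (m + n) (Pp m P) Q0 (phi S) (i + m) (phi T)),
        forall M, ssyt m n P Q M -> (forall x, ssyt m n P Q x -> tle m P Q x M) ->
          forall y, (exists x, ssyt m n P Q x /\ y = phi x) <->
                    jcomp (edge (m + n) (m + n) (Pp m P) Q0) (fun k => m.+1 <= k <= m + n - 1) (phi M) y,
        forall x i, ssyt m n P Q x -> 1 <= i <= n - 1 ->
          weight (edge (m + n) (m + n) (Pp m P) Q0) (i + m) (phi x) = weight (edge m n P Q) i x
      & forall S T i j j', edge m n P Q S i T -> diffpos m (garr m P Q S) (garr m P Q T) i j ->
          diffpos (m + n) (garr (m + n) (Pp m P) Q0 (phi S)) (garr (m + n) (Pp m P) Q0 (phi T)) (i + m) j' ->
          Xcoef (m + n) (garr (m + n) (Pp m P) Q0 (phi T)) (i + m) j' = Xcoef m (garr m P Q T) i j /\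
          Ycoef (m + n) (garr (m + n) (Pp m P) Q0 (phi T)) (i + m) j' = Ycoef m (garr m P Q T) i j].
Proof.
split.
  move=> x Lx; exists (Fx m n P Q x); split; [exact: (Fx_ssyt n HQ x Lx) | exact: (@Fx_garr m n P Q HQ HQP x Lx)].
move=> phi Hphi.
have Hpe : forall x, ssyt m n P Q x -> phi x = Fx m n P Q x.
  move=> x Lx; case: (Hphi x Lx) => Kp Hg.
  apply: (@tab_eq _ _ _ _ _ Kp (Fx_ssyt n HQ x Lx)) => k l Hk Hl.
  by rewrite Hg // (@Fx_garr m n P Q HQ HQP x Lx).
split.
- move=> x y Lx Ly; rewrite !Hpe //; exact: Fx_inj.
- move=> S T i LS LT; rewrite !Hpe //; exact: edge_equiv.
- move=> M LM HM y; split.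
  + case=> x [Lx ->]; rewrite !Hpe //; exact: connect_L.
  + rewrite Hpe // => Hj.
    have HJ : forall j, (fun k => m.+1 <= k <= m + n - 1) j -> m < j by move=> j /= ?; lia.
    have [z [Lz Hz]] := @jcomp_img m n P Q _ _ _ HJ Hj (ex_intro _ M (conj LM erefl)).
    by exists z; rewrite Hpe.
- move=> x i Lx Hi; rewrite Hpe // /weight (@rho_eq m n P Q HQ) ?(@len_eq m n P Q HQ) //; lia.
- move=> S T i j j' HE [Hjin Hinc Hsame] [Hj'in Hinc' Hsame'].
  have [LS LT [r [c [Hc HST Hi Hoth]]]] := HE.
  have [T0 T1 T2 T3] := LT; have [S0 S1 S2 S3] := LS.
  have HTr := T1 _ _ Hc; have HSr := S1 _ _ Hc.
  have HgT : forall x, ssyt m n P Q x -> forall k l, k <= m + n -> l \in Cset (m + n) k ->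
      garr (m + n) (Pp m P) Q0 (phi x) k l = phiarr m n (garr m P Q x) k l.
    by move=> x Lx; case: (Hphi x Lx).
  case/mapP: Hj'in => t; rewrite mem_iota => Ht Hj'.
  have Hi1 : 1 <= i by lia.
  have Hin : i + 1 <= n by lia.
  have E1 := @gK m n _ _ (HgT T LT) (i + m)%N t ltac:(lia) ltac:(lia).
  have E2 := @gK m n _ _ (HgT S LS) (i + m)%N t ltac:(lia) ltac:(lia).
  rewrite -Hj' in E1 E2.
  move: Hinc'; rewrite E1 E2.
  case: (leqP m t) => Htm; first by move=> ?; lia.
  have -> : ((i + m) - m)%N = i by lia.
  move=> Heq.
  have Hjj : (Posz i - Posz t)%R = j.
    case: (eqVneq (Posz i - Posz t)%R j) => // Hne.
    have := Hsame i (Posz i - Posz t)%R; rewrite Heq => H.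
    have : garr m P Q S i (Posz i - Posz t)%R = (garr m P Q S i (Posz i - Posz t)%R + 1)%R.
      by apply: H => -[Hne']; rewrite Hne' eqxx in Hne.
    by move=> ?; lia.
  apply: XY_eq => //.
  + exact: HgT.
  + lia.
  + rewrite Hinc; have := garr_ge0 m P Q S i j; lia.
Qed.

Theorem proposition6p5 (m n : nat) (P Q : nat -> nat)
  (Hn : 2 <= n) (Hnm : n <= m)
  (HP : forall r, 1 <= r < m -> P r.+1 <= P r)
  (HQ : forall r, 1 <= r < m -> Q r.+1 <= Q r)
  (HQP : forall r, 1 <= r <= m -> Q r <= P r)
  (Hcol : forall c, count (fun r => cell m P Q r c) (iota 1 m) <= n) :
  let L := ssyt m n P Q in
  let P' := fun r => if r <= m then P r else 0 in
  let Q' := fun _ : nat => 0 in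
  let K := ssyt (m + n) (m + n) P' Q' in
  let EL := edge m n P Q in
  let EK := edge (m + n) (m + n) P' Q' in
  let g := garr m P Q in
  let g' := garr (m + n) P' Q' in
  (forall x, L x -> exists y, K y /\
     forall k l, k <= m + n -> l \in Cset (m + n) k -> g' y k l = phiarr m n (g x) k l) /\
  forall phi : tab -> tab,
    (forall x, L x -> K (phi x) /\
       forall k l, k <= m + n -> l \in Cset (m + n) k -> g' (phi x) k l = phiarr m n (g x) k l) ->
    [/\ forall x y, L x -> L y -> phi x = phi y -> x = y,
        forall S T i, L S -> L T -> (EL S i T <-> EK (phi S) (i + m) (phi T)),
        forall M, L M -> (forall x, L x -> tle m P Q x M) ->
          forall y, (exists x, L x /\ y = phi x) <->
                    jcomp EK (fun k => m.+1 <= k <= m + n - 1) (phi M) y,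
        forall x i, L x -> 1 <= i <= n - 1 -> weight EK (i + m) (phi x) = weight EL i x
      & forall S T i j j', EL S i T -> diffpos m (g S) (g T) i j ->
          diffpos (m + n) (g' (phi S)) (g' (phi T)) (i + m) j' ->
          Xcoef (m + n) (g' (phi T)) (i + m) j' = Xcoef m (g T) i j /\
          Ycoef (m + n) (g' (phi T)) (i + m) j' = Ycoef m (g T) i j].
Proof. exact: (@main m n P Q Hn Hnm HP HQ HQP Hcol). Qed.
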